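(* Let $G=(V,E)$ be an undirected simple graph, let $k\ge 2$ be an integer, and let $e^*\in E$ satisfy $\tau_G(e^* )<k+1$. Then for every vertex $v\in V$, the edge $e^*$ is not contained in any connected component of the $k$-truss of the ego-network $G_{N(v)}$.
   Context: $N(v)$ is the set of neighbors of $v$ and $G_{N(v)}$ is the subgraph of $G$ induced by $N(v)$. For a subgraph $H$ and $e\in E(H)$, $\sup_H(e)$ is the number of triangles of $H$ containing $e$. The trussness of a subgraph $H$ with at least one edge is $\tau(H)=\min_{e\in E(H)}\sup_H(e)+2$, and the trussness of an edge $e$ in $G$ is $\tau_G(e)=\max\{\tau(H'):H'\subseteq G,\ e\in E(H')\}$. For an integer $k\ge 2$, the $k$-truss of a graph $H$ is the subgraph formed by the largest edge set $F\subseteq E(H)$ such that every edge of $F$ lies in at least $k-2$ triangles all of whose edges are in $F$. *)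

(* Defs.v *)
From mathcomp Require Import all_boot.
Set Implicit Arguments. Unset Strict Implicit. Unset Printing Implicit Defensive.

(* A simple undirected graph on a finite vertex type T is a symmetric,
   irreflexive relation adj; edges are 2-element vertex sets {u, w}. *)
Definition simple_graph (T : finType) (adj : rel T) : Prop :=
  symmetric adj /\ irreflexive adj.

Definition edges (T : finType) (adj : rel T) : {set {set T}} :=
  [set [set p.1; p.2] | p : T * T & adj p.1 p.2].

Definition nbhd (T : finType) (adj : rel T) (v : T) : {set T} :=
  [set u | adj v u].

Definition ego_edges (T : finType) (adj : rel T) (v : T) : {set {set T}} :=
  [set f in edges adj | f \subset nbhd adj v].

(* sup_H(f): number of triangles of the subgraph with edge set F containing f,
   i.e. number of vertices x outside f joined in F to both endpoints of f. *)
Definition sup (T : finType) (F : {set {set T}}) (f : {set T}) : nat :=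
  #|[set x | (x \notin f) && [forall y in f, [set y; x] \in F]]|.

(* tau(H) = min_{f in E(H)} sup_H(f) + 2   (meaningful for F nonempty;
   the initial value of the fold is sup at some element of F). *)
Definition tau (T : finType) (F : {set {set T}}) : nat :=
  (\big[minn/sup F (odflt set0 [pick f in F])]_(f in F) sup F f) + 2.

(* tau_G(e) = max { tau(H') : H' subgraph of G, e in E(H') }.
   Trussness of a subgraph depends only on its edge set. *)
Definition trussness (T : finType) (adj : rel T) (e : {set T}) : nat :=
  \max_(F : {set {set T}} | (F \subset edges adj) && (e \in F)) tau F.

Definition truss_ok (T : finType) (EH : {set {set T}}) (k : nat)
  (F : {set {set T}}) : bool :=
  (F \subset EH) && [forall f in F, k - 2 <= sup F f].

Definition is_ktruss (T : finType) (EH : {set {set T}}) (k : nat)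
  (F : {set {set T}}) : Prop :=
  truss_ok EH k F /\ forall F', truss_ok EH k F' -> F' \subset F.

(* Connected components of the graph with edge set F: the component of
   vertex x has as edges those edges of F with an endpoint connected to x. *)
Definition adjF (T : finType) (F : {set {set T}}) : rel T :=
  fun a b => [set a; b] \in F.

Definition component_edges (T : finType) (F : {set {set T}}) (x : T)
  : {set {set T}} :=
  [set f in F | [exists y in f, connect (adjF F) x y]].

(* Main.v *)
Require Import Defs.
From mathcomp Require Import all_boot.
From mathcomp Require Import zify.

Lemma forall2 (T : finType) (P : pred T) a b :
  [forall y in [set a; b], P y] = P a && P b.
Proof.
apply/forallP/andP => [H|[Ha Hb] y]; first split.
- by move: (H a); rewrite !inE eqxx.
- by move: (H b); rewrite !inE eqxx orbT.
- by rewrite !inE; apply/implyP; case/orP => /eqP->.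
Qed.

Lemma in_edges (T : finType) (adj : rel T) f :
  f \in edges adj -> exists a b, f = [set a; b] /\ adj a b.
Proof. by case/imsetP => [[a b]]; rewrite inE /= => Hab ->; exists a, b. Qed.

Lemma tau_ge (T : finType) (F : {set {set T}}) m :
  F != set0 -> (forall f, f \in F -> m <= sup F f) -> m + 2 <= tau F.
Proof.
move=> Hne H; rewrite /tau leq_add2r.
apply: (big_ind (fun x => m <= x)) => //.
- case: pickP => [f Hf|H0] /=; first exact: H.
  by case/set0Pn: Hne => f; rewrite H0.
- by move=> x y Hx Hy; rewrite leq_min Hx Hy.
Qed.

Theorem mainTheorem4 (T : finType) (adj : rel T) (k : nat) (estar : {set T}) :
  simple_graph adj -> 2 <= k ->
  estar \in edges adj ->
  trussness adj estar < k + 1 ->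
  forall (v : T) (Ftruss : {set {set T}}),
    is_ktruss (ego_edges adj v) k Ftruss ->
    forall x : T, estar \notin component_edges Ftruss x.
Proof.
move=> [Hsym Hirr] Hk Hest Htr v S [/andP [HSsub /forallP HSok] _] x0.
apply/negP; rewrite inE => /andP [HeS _].
pose U := [set u | [exists f in S, u \in f]].
pose E2 := S :|: [set [set v; u] | u in U].
have HSE f : f \in S -> f \in edges adj /\ f \subset nbhd adj v.
  by move=> Hf; move/subsetP: HSsub => /(_ f Hf); rewrite inE => /andP.
have Hf2 f : f \in S -> exists a b, [/\ f = [set a; b], adj a b, adj v a & adj v b].
  move=> Hf; case: (HSE f Hf) => /in_edges [a [b [-> Hab]]] /subsetP Hs.
  exists a, b; split => //.
  + by move: (Hs a); rewrite !inE eqxx /= => /(_ isT).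
  + by move: (Hs b); rewrite !inE eqxx orbT /= => /(_ isT).
have HU f u : f \in S -> u \in f -> u \in U.
  by move=> Hf Hu; rewrite inE; apply/existsP; exists f; rewrite Hf.
have HvU u : u \in U -> [set v; u] \in E2.
  by move=> Hu; rewrite inE; apply/orP; right; apply/imsetP; exists u.
have HSE2 f : f \in S -> f \in E2 by move=> Hf; rewrite inE Hf.
have HSv a y : [set a; y] \in S -> adj v y.
  move=> Hf; case: (HSE _ Hf) => _ /subsetP /(_ y).
  by rewrite !inE eqxx orbT => /(_ isT).
have Hvv : adj v v = false by apply: Hirr.
have key a b : [set a; b] \in S -> adj a b -> adj v a -> adj v b ->
    k - 1 <= sup E2 [set v; a].
  move=> Hf Hab Hva Hvb.
  have := HSok [set a; b]; rewrite Hf /= /sup => Hs.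
  set X := [set y | _ & _] in Hs.
  have HbX : b \notin X by rewrite inE !inE eqxx orbT.
  have : #|b |: X| <= #|[set y | (y \notin [set v; a]) &&
        [forall y0 in [set v; a], [set y0; y] \in E2]]|.
    apply: subset_leq_card; apply/subsetP => y; rewrite !inE.
    case/orP => [/eqP ->|].
      have HbU : b \in U by apply: (HU _ _ Hf); rewrite !inE eqxx orbT.
      rewrite forall2 (HvU b HbU) (HSE2 _ Hf) andbT.
      rewrite andbT; apply/negP; case/orP => /eqP Hb.
        by move: Hvb; rewrite Hb Hvv.
      by move: Hab; rewrite Hb Hirr.
    rewrite forall2 => /andP [Hy /andP [Hay Hby]].
    have HyU : y \in U by apply: (HU _ _ Hay); rewrite !inE eqxx orbT.
    rewrite forall2 (HSE2 _ Hay) (HvU y HyU) andbT ?andbT.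
    apply/negP; case/orP => /eqP Hy'.
      by move: (HSv _ _ Hay); rewrite Hy' Hvv.
    by move: Hy; rewrite Hy' eqxx.
  rewrite cardsU1 HbX /=; move: Hs; set n := #|X|; move=> Hs Hle.
  apply: leq_trans Hle; lia.
have key2 f : f \in S -> k - 1 <= sup E2 f.
  move=> Hf; case: (Hf2 f Hf) => a [b [Hfe Hab Hva Hvb]].
  have := HSok f; rewrite Hf /= /sup => Hs.
  set X := [set y | _ & _] in Hs.
  have HvX : v \notin X.
    rewrite inE Hfe forall2; apply/negP => /andP [_ /andP [H1 _]].
    by move: (HSv _ _ H1); rewrite Hvv.
  have : #|v |: X| <= #|[set y | (y \notin f) &&
        [forall y0 in f, [set y0; y] \in E2]]|.
    apply: subset_leq_card; apply/subsetP => y; rewrite !inE.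
    case/orP => [/eqP ->|].
      have HaU : a \in U by apply: (HU _ _ Hf); rewrite Hfe !inE eqxx.
      have HbU : b \in U by apply: (HU _ _ Hf); rewrite Hfe !inE eqxx orbT.
      rewrite Hfe forall2 (setUC [set a] [set v]) (setUC [set b] [set v]).
      rewrite (HvU a HaU) (HvU b HbU) !inE ?andbT; apply/negP; case/orP => /eqP Hb.
        by move: Hva; rewrite -Hb Hvv.
      by move: Hvb; rewrite -Hb Hvv.
    case/andP => Hy /forallP Hall; rewrite Hy /=; apply/forallP => y0.
    by apply/implyP => Hy0; move/implyP: (Hall y0) => /(_ Hy0); apply: HSE2.
  rewrite cardsU1 HvX /=; move=> Hle.
  apply: leq_trans Hle; lia.
have HE2 f : f \in E2 -> k - 1 <= sup E2 f.
  rewrite inE; case/orP; first exact: key2.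
  case/imsetP => u; rewrite inE => /existsP [f0 /andP [Hf0 Hu]] ->.
  case: (Hf2 f0 Hf0) => a [b [Hfe Hab Hva Hvb]].
  move: Hu; rewrite Hfe !inE; case/orP => /eqP ->.
    by apply: (key a b) => //; rewrite -Hfe.
  apply: (key b a) => //; first by rewrite setUC -Hfe.
  by rewrite Hsym.
have Htau : k + 1 <= tau E2.
  have -> : k + 1 = (k - 1) + 2 by lia.
  apply: tau_ge => //; apply/set0Pn; exists estar; exact: HSE2.
have HE2sub : (E2 \subset edges adj) && (estar \in E2).
  rewrite HSE2 // andbT; apply/subsetP => f; rewrite inE; case/orP.
    by move=> Hf; case: (HSE f Hf).
  case/imsetP => u; rewrite inE => /existsP [f0 /andP [Hf0 Hu]] ->.
  apply/imsetP; exists (v, u) => //; rewrite inE /=.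
  by case: (HSE f0 Hf0) => _ /subsetP /(_ u Hu); rewrite inE.
have := @leq_bigmax_cond _ (fun F : {set {set T}} => (F \subset edges adj) && (estar \in F)) (@tau T) E2 HE2sub.
rewrite -/(trussness adj estar) => Hle.
by move: (leq_trans Htau Hle); rewrite leqNgt Htr.
Qed.
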